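(* Let ${\cal H}$ be a hypergraph. Then: (i) if ${\cal H}={\cal H}_1\odot{\cal H}_2$, then $\overline{\cal H}=\overline{{\cal H}_2}\odot\overline{{\cal H}_1}$ (where both gluings use the same new vertex); (ii) if $z$ is a vertex of ${\cal H}$ such that ${\cal H}$ is $z$-decomposable, then $\overline{\cal H}$ is also $z$-decomposable; (iii) if $u$ is an isolated or a universal vertex of ${\cal H}$, then ${\cal H}$ is $u$-decomposable.
   Context: A hypergraph ${\cal H}=(V,{\cal E})$ consists of a finite vertex set $V$ and a set ${\cal E}$ of subsets of $V$. The complement $\overline{\cal H}$ has vertex set $V$ and hyperedges $\{V\setminus e: e\in{\cal E}\}$. Given vertex-disjoint hypergraphs ${\cal H}_1=(V_1,{\cal E}_1)$, ${\cal H}_2=(V_2,{\cal E}_2)$ and a new vertex $z\notin V_1\cup V_2$, the gluing ${\cal H}_1\odot{\cal H}_2$ has vertex set $V_1\cup V_2\cup\{z\}$ and hyperedge set $\{\{z\}\cup e: e\in{\cal E}_1\}\cup\{V_1\cup e: e\in{\cal E}_2\}$. For a vertex $z$, ${\cal H}$ is $z$-decomposable if for every two hyperedges $e,f$ with $z\in e\setminus f$ we have $e\setminus\{z\}\subseteq f$; equivalently, $V=\{z\}\cup V_1\cup V_2$ (disjoint) and ${\cal H}={\cal H}_1\odot{\cal H}_2$ for some hypergraphs ${\cal H}_1$ on $V_1$ and ${\cal H}_2$ on $V_2$ with new vertex $z$. A vertex is universal (resp. isolated) if it is contained in all (resp. no) hyperedges. *)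

(* Defs.v *)
From mathcomp Require Import all_boot.
Set Implicit Arguments. Unset Strict Implicit. Unset Printing Implicit Defensive.

Section Hypergraphs.
Variable T : finType.

Record hypergraph := Hypergraph { hverts : {set T}; hedges : {set {set T}} }.

Definition is_hypergraph (H : hypergraph) : Prop :=
  forall e, e \in hedges H -> e \subset hverts H.

Definition hcompl (H : hypergraph) : hypergraph :=
  Hypergraph (hverts H) [set hverts H :\: e | e in hedges H].

Definition glue (H1 H2 : hypergraph) (z : T) : hypergraph :=
  Hypergraph (hverts H1 :|: hverts H2 :|: [set z])
    ([set z |: e | e in hedges H1] :|: [set hverts H1 :|: e | e in hedges H2]).

Definition decomposable (H : hypergraph) (z : T) : Prop :=
  forall e f, e \in hedges H -> f \in hedges H ->
    z \in e -> z \notin f -> e :\ z \subset f.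

Definition universal (H : hypergraph) (u : T) : Prop :=
  forall e, e \in hedges H -> u \in e.
Definition isolated (H : hypergraph) (u : T) : Prop :=
  forall e, e \in hedges H -> u \notin e.

End Hypergraphs.

(* Main.v *)
Require Import Defs.
From mathcomp Require Import all_boot.

Theorem proposition4 (T : finType) :
  (* (i) *)
  (forall (H H1 H2 : hypergraph T) (z : T),
     is_hypergraph H1 -> is_hypergraph H2 ->
     [disjoint hverts H1 & hverts H2] ->
     z \notin hverts H1 :|: hverts H2 ->
     H = glue H1 H2 z ->
     hcompl H = glue (hcompl H2) (hcompl H1) z) /\
  (* (ii) *)
  (forall (H : hypergraph T) (z : T),
     is_hypergraph H -> z \in hverts H ->
     decomposable H z -> decomposable (hcompl H) z) /\
  (* (iii) *)
  (forall (H : hypergraph T) (u : T),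
     is_hypergraph H -> u \in hverts H ->
     isolated H u \/ universal H u -> decomposable H u).
Proof.
split; [|split].
- move=> H H1 H2 z h1 h2 dis zn ->.
  rewrite /hcompl /glue /=.
  have Hv : hverts H2 :|: hverts H1 :|: [set z] = hverts H1 :|: hverts H2 :|: [set z].
    by rewrite (setUC (hverts H2)).
  rewrite Hv imsetU -!imset_comp [X in _ = Hypergraph _ X]setUC; congr (Hypergraph _ (_ :|: _)).
  + apply: eq_in_imset => e /h1 sub /=; apply/setP => x.
    move: zn; rewrite !inE negb_or => /andP[z1 z2].
    have s1 := subsetP sub x; have d := @disjointFr _ _ _ x dis.
    case: (x =P z) => [xz|_]; first by subst x; rewrite (negbTE z1) (negbTE z2); case: (z \in e).
    move: s1 d; case: (x \in e); case: (x \in hverts H1); case: (x \in hverts H2) => //= s1 d;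
      by [ have := s1 isT | have := d isT ].
  + apply: eq_in_imset => e /h2 sub /=; apply/setP => x.
    move: zn; rewrite !inE negb_or => /andP[z1 z2].
    have s1 := subsetP sub x; have d := @disjointFr _ _ _ x dis.
    case: (x =P z) => [xz|_]; first by subst x; rewrite (negbTE z1) (negbTE z2); case: (z \in e) (s1) => //= /(_ isT); rewrite (negbTE z2).
    move: s1 d; case: (x \in e); case: (x \in hverts H1); case: (x \in hverts H2) => //= s1 d;
      by [ have := s1 isT | have := d isT ].
- move=> H z hH zV dec e' f' /imsetP[e eH ->] /imsetP[f fH ->].
  rewrite !inE zV !andbT => ze zf; move: zf; rewrite negbK => zf.
  have sfe := dec f e fH eH zf ze.
  apply/subsetP => x; rewrite !inE => /and3P[xz xe xV].
  rewrite xV andbT; apply/negP => xf; move/negP: xe; apply.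
  by apply: (subsetP sfe); rewrite !inE xz.
- move=> H u _ _ [iso|uni] e f eH fH ue uf.
  + by move: (iso e eH); rewrite ue.
  + by move: (uni f fH); rewrite (negbTE uf).
Qed.
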